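(* Let $K$ be a field. Let $(L,M,N,P,h,\lambda,\lambda',\mu,\nu)$ be a Hopf crossed square of cocommutative Hopf algebras over $K$. Define $M\otimes L\to L$ by $m\otimes l\mapsto \mu(m)\triangleright l$ and $N\otimes L\to L$ by $n\otimes l\mapsto \nu(n)\triangleright l$. Then with these actions (and the given $P$-actions on $L,M,N$ and the given $h$), $(L,M,N,P,h)$ is a Hopf $2$-action; moreover every morphism of Hopf crossed squares is a morphism of the corresponding Hopf $2$-actions. Hence the category $\mathsf{X}^2(\mathsf{Hopf}_{K,coc})$ of Hopf crossed squares is a subcategory of the category $\mathsf{Act}^2(\mathsf{Hopf}_{K,coc})$ of Hopf $2$-actions.
   Context: All Hopf algebras are cocommutative over $K$; Sweedler notation $\Delta(x)=x_1\otimes x_2$, antipode $S$, counit $\epsilon$. For a cocommutative Hopf algebra $B$, a $B$-module Hopf algebra is a Hopf algebra $X$ with a linear map $B\otimes X\to X$, $b\otimes x\mapsto b\triangleright x$, satisfying $(bb')\triangleright x=b\triangleright(b'\triangleright x)$, $1_B\triangleright x=x$, $b\triangleright(xy)=(b_1\triangleright x)(b_2\triangleright y)$, $b\triangleright 1_X=\epsilon(b)1_X$, $\Delta(b\triangleright x)=b_1\triangleright x_1\otimes b_2\triangleright x_2$, $\epsilon(b\triangleright x)=\epsilon(b)\epsilon(x)$. A Hopf crossed module $(B,X,d)$ is a $B$-module Hopf algebra $X$ with a Hopf algebra morphism $d\colon X\to B$ such that $d(b\triangleright x)=b_1d(x)S(b_2)$ and $d(y)\triangleright x=y_1xS(y_2)$.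 A Hopf crossed square $(L,M,N,P,h,\lambda,\lambda',\mu,\nu)$ is a commutative square of Hopf algebra morphisms $\lambda\colon L\to M$, $\lambda'\colon L\to N$, $\mu\colon M\to P$, $\nu\colon N\to P$ ($\mu\lambda=\nu\lambda'$), where $L,M,N$ are $P$-module Hopf algebras and $h\colon M\otimes N\to L$ is a coalgebra map such that for all $l\in L$, $m,m'\in M$, $n,n'\in N$, $p\in P$: (CS1) $(P,M,\mu)$, $(P,N,\nu)$, $(P,L,\mu\lambda)$ are Hopf crossed modules; (CS2) $\lambda,\lambda'$ are $P$-linear; (CS3) $h$ is $P$-linear, i.e. $h(p_1\triangleright m\otimes p_2\triangleright n)=p\triangleright h(m\otimes n)$; (CS4) $\lambda h(m\otimes n)=m_1(\nu(n)\triangleright S(m_2))$ and $\lambda' h(m\otimes n)=(\mu(m)\triangleright n_1)S(n_2)$; (CS5) $h(\lambda(l)\otimes n)=l_1(\nu(n)\triangleright S(l_2))$ and $h(m\otimes\lambda'(l))=(\mu(m)\triangleright l_1)S(l_2)$; (CS6) $h(m\otimes nn')=h(m_1\otimes n_1)(\nu(n_2)\triangleright h(m_2\otimes n'))$ and $h(mm'\otimes n)=(\mu(m_1)\triangleright h(m'\otimes n_1))h(m_2\otimes n_2)$. A morphism of Hopf crossed squares is a quadruple of Hopf algebra morphisms $\alpha\colon L\to\hat L$, $\beta\colon M\to\hat M$, $\gamma\colon N\to\hat N$, $\delta\colon P\to\hat P$ commuting with $\lambda,\lambda',\mu,\nu$ and their hatted versions, with $\alpha(p\triangleright l)=\delta(p)\triangleright\alpha(l)$,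 $\beta(p\triangleright m)=\delta(p)\triangleright\beta(m)$, $\gamma(p\triangleright n)=\delta(p)\triangleright\gamma(n)$, and $\alpha h=\hat h(\beta\otimes\gamma)$. A Hopf $2$-action $(L,M,N,P,h)$ consists of cocommutative Hopf algebras $L,M,N,P$ such that $L,M,N$ are $P$-module Hopf algebras, $L$ is an $M$-module Hopf algebra and an $N$-module Hopf algebra, and a coalgebra morphism $h\colon M\otimes N\to L$, such that for all $m,m'\in M$, $n,n'\in N$, $l\in L$, $p\in P$: (2A1) $(p_1\triangleright m)\triangleright(p_2\triangleright l)=p\triangleright(m\triangleright l)$ and $(p_1\triangleright n)\triangleright(p_2\triangleright l)=p\triangleright(n\triangleright l)$; (2A2) $h$ is $P$-linear; (2A3) $h(1_M\otimes n)=\epsilon(n)1_L$, $h(m\otimes 1_N)=\epsilon(m)1_L$; (2A4) $h(m\otimes nn')=h(m_1\otimes n_1)(n_2\triangleright h(m_2\otimes n'))$ and $h(mm'\otimes n)=(m_1\triangleright h(m'\otimes n_1))h(m_2\otimes n_2)$; (2A5) $(m_1\triangleright(n_1\triangleright l))h(m_2\otimes n_2)=h(m_1\otimes n_1)(n_2\triangleright(m_2\triangleright l))$. A morphism of Hopf $2$-actions $(L,M,N,P,h)\to(L',M',N',P',h')$ is a quadruple of Hopf algebra morphisms $\alpha\colon L\to L'$, $\beta\colon M\to M'$, $\gamma\colon N\to N'$, $\delta\colon P\to P'$ with $\alpha(p\triangleright l)=\delta(p)\triangleright\alpha(l)$, $\alpha(m\triangleright l)=\beta(m)\triangleright\alpha(l)$,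 $\alpha(n\triangleright l)=\gamma(n)\triangleright\alpha(l)$, $\beta(p\triangleright m)=\delta(p)\triangleright\beta(m)$, $\gamma(p\triangleright n)=\delta(p)\triangleright\gamma(n)$, and $\alpha h=h'(\beta\otimes\gamma)$. *)

(* Defs.v *)
(* Cocommutative Hopf algebras over a field K, with
   tensors represented as finite sums of pure tensors (lists of pairs),
   and equality of tensors defined via the universal property of the
   tensor product (agreement under every K-bilinear map). *)
From HB Require Import structures.
From mathcomp Require Import all_boot all_algebra.
Set Implicit Arguments. Unset Strict Implicit. Unset Printing Implicit Defensive.
Import GRing.Theory.
Local Open Scope ring_scope.

Section Hopf.
Variable K : fieldType.

Definition tsum (X Y : Type) (W : nmodType) (f : X -> Y -> W) (t : seq (X * Y)) : W :=
  \sum_(p <- t) f p.1 p.2.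

Definition lin_map (X W : lmodType K) (f : X -> W) : Prop :=
  forall (a : K) (x y : X), f (a *: x + y) = a *: f x + f y.

Definition bilin_map (X Y W : lmodType K) (f : X -> Y -> W) : Prop :=
  (forall y, lin_map (fun x => f x y)) /\ (forall x, lin_map (f x)).

Definition trilin_map (X Y Z W : lmodType K) (f : X -> Y -> Z -> W) : Prop :=
  [/\ (forall y z, lin_map (fun x => f x y z)),
      (forall x z, lin_map (fun y => f x y z)) &
      (forall x y, lin_map (f x y))].

(* t = t' as elements of X (x) Y (universal property of the tensor product) *)
Definition teq (X Y : lmodType K) (t t' : seq (X * Y)) : Prop :=
  forall (W : lmodType K) (f : X -> Y -> W), bilin_map f -> tsum f t = tsum f t'.

Record cocHopf_axioms (H : algType K) (D : H -> seq (H * H)) (e : H -> K)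
    (S : H -> H) : Prop := {
  ax_D_lin : forall (a : K) (x y : H),
    teq (D (a *: x + y)) ([seq (a *: p.1, p.2) | p <- D x] ++ D y);
  ax_coassoc : forall (x : H) (W : lmodType K) (f : H -> H -> H -> W),
    trilin_map f ->
    tsum (fun u v => tsum (fun u1 u2 => f u1 u2 v) (D u)) (D x) =
    tsum (fun u v => tsum (fun v1 v2 => f u v1 v2) (D v)) (D x);
  ax_counit : forall x : H,
    tsum (fun u v => e u *: v) (D x) = x /\ tsum (fun u v => e v *: u) (D x) = x;
  ax_eps_lin : forall (a : K) (x y : H), e (a *: x + y) = a * e x + e y;
  ax_D_one : teq (D 1) [:: (1, 1)];
  ax_D_mul : forall x y : H,
    teq (D (x * y)) [seq (p.1 * q.1, p.2 * q.2) | p <- D x, q <- D y];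
  ax_eps_one : e 1 = 1;
  ax_eps_mul : forall x y : H, e (x * y) = e x * e y;
  ax_S_lin : lin_map S;
  ax_antipode : forall x : H,
    tsum (fun u v => S u * v) (D x) = e x *: 1 /\
    tsum (fun u v => u * S v) (D x) = e x *: 1;
  ax_cocomm : forall x : H, teq (D x) [seq (p.2, p.1) | p <- D x]
}.

Record cocHopf := CocHopf {
  hcar :> algType K;
  hD : hcar -> seq (hcar * hcar);
  heps : hcar -> K;
  hS : hcar -> hcar;
  hax : cocHopf_axioms hD heps hS
}.

Definition hopf_morph (H H' : cocHopf) (f : H -> H') : Prop :=
  [/\ lin_map f, f 1 = 1, (forall x y, f (x * y) = f x * f y),
      (forall x, teq (hD (f x)) [seq (f p.1, f p.2) | p <- hD x]) &
      (forall x, heps (f x) = heps x)].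

Definition module_hopf (B X : cocHopf) (act : B -> X -> X) : Prop :=
  [/\ bilin_map act,
      (forall b b' x, act (b * b') x = act b (act b' x)) /\ (forall x, act 1 x = x),
      (forall b x y, act b (x * y) = tsum (fun b1 b2 => act b1 x * act b2 y) (hD b))
        /\ (forall b, act b 1 = heps b *: 1),
      (forall b x, teq (hD (act b x))
                       [seq (act p.1 q.1, act p.2 q.2) | p <- hD b, q <- hD x]) &
      (forall b x, heps (act b x) = heps b * heps x)].

Definition crossed_module (B X : cocHopf) (act : B -> X -> X) (d : X -> B) : Prop :=
  [/\ module_hopf act, hopf_morph d,
      (forall b x, d (act b x) = tsum (fun b1 b2 => b1 * d x * hS b2) (hD b)) &
      (forall y x, act (d y) x = tsum (fun y1 y2 => y1 * x * hS y2) (hD y))].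

(* coalgebra map M (x) N -> L, given as a bilinear map *)
Definition coalg_map2 (M N L : cocHopf) (h : M -> N -> L) : Prop :=
  [/\ bilin_map h,
      (forall m n, teq (hD (h m n))
                       [seq (h p.1 q.1, h p.2 q.2) | p <- hD m, q <- hD n]) &
      (forall m n, heps (h m n) = heps m * heps n)].

Record is_crossed_square (L M N P : cocHopf)
    (aL : P -> L -> L) (aM : P -> M -> M) (aN : P -> N -> N) (h : M -> N -> L)
    (lam : L -> M) (lam' : L -> N) (mu : M -> P) (nu : N -> P) : Prop := {
  cs_lam : hopf_morph lam;
  cs_lam' : hopf_morph lam';
  cs_mu : hopf_morph mu;
  cs_nu : hopf_morph nu;
  cs_comm : forall l, mu (lam l) = nu (lam' l);
  cs_h : coalg_map2 h;
  cs1_M : crossed_module aM mu;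
  cs1_N : crossed_module aN nu;
  cs1_L : crossed_module aL (fun l => mu (lam l));
  cs2 : (forall p l, lam (aL p l) = aM p (lam l)) /\
        (forall p l, lam' (aL p l) = aN p (lam' l));
  cs3 : forall p m n, tsum (fun p1 p2 => h (aM p1 m) (aN p2 n)) (hD p) = aL p (h m n);
  cs4 : (forall m n, lam (h m n) = tsum (fun m1 m2 => m1 * aM (nu n) (hS m2)) (hD m)) /\
        (forall m n, lam' (h m n) = tsum (fun n1 n2 => aN (mu m) n1 * hS n2) (hD n));
  cs5 : (forall l n, h (lam l) n = tsum (fun l1 l2 => l1 * aL (nu n) (hS l2)) (hD l)) /\
        (forall m l, h m (lam' l) = tsum (fun l1 l2 => aL (mu m) l1 * hS l2) (hD l));
  cs6 : (forall m n n', h m (n * n') =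
           tsum (fun m1 m2 => tsum (fun n1 n2 =>
                   h m1 n1 * aL (nu n2) (h m2 n')) (hD n)) (hD m)) /\
        (forall m m' n, h (m * m') n =
           tsum (fun m1 m2 => tsum (fun n1 n2 =>
                   aL (mu m1) (h m' n1) * h m2 n2) (hD n)) (hD m))
}.

Record xsquare := XSquare {
  sL : cocHopf; sM : cocHopf; sN : cocHopf; sP : cocHopf;
  sactL : sP -> sL -> sL; sactM : sP -> sM -> sM; sactN : sP -> sN -> sN;
  sh : sM -> sN -> sL;
  slam : sL -> sM; slam' : sL -> sN; smu : sM -> sP; snu : sN -> sP;
  sax : is_crossed_square sactL sactM sactN sh slam slam' smu snu
}.

Record xsq_morph (X Y : xsquare) (alpha : sL X -> sL Y) (beta : sM X -> sM Y)
    (gamma : sN X -> sN Y) (delta : sP X -> sP Y) : Prop := {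
  xm_alpha : hopf_morph alpha;
  xm_beta : hopf_morph beta;
  xm_gamma : hopf_morph gamma;
  xm_delta : hopf_morph delta;
  xm_lam : forall l, beta (@slam X l) = @slam Y (alpha l);
  xm_lam' : forall l, gamma (@slam' X l) = @slam' Y (alpha l);
  xm_mu : forall m, delta (@smu X m) = @smu Y (beta m);
  xm_nu : forall n, delta (@snu X n) = @snu Y (gamma n);
  xm_actL : forall p l, alpha (@sactL X p l) = @sactL Y (delta p) (alpha l);
  xm_actM : forall p m, beta (@sactM X p m) = @sactM Y (delta p) (beta m);
  xm_actN : forall p n, gamma (@sactN X p n) = @sactN Y (delta p) (gamma n);
  xm_h : forall m n, alpha (@sh X m n) = @sh Y (beta m) (gamma n)
}.

Record is_2action (L M N P : cocHopf)
    (aL : P -> L -> L) (aM : P -> M -> M) (aN : P -> N -> N)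
    (aML : M -> L -> L) (aNL : N -> L -> L) (h : M -> N -> L) : Prop := {
  a_L : module_hopf aL;
  a_M : module_hopf aM;
  a_N : module_hopf aN;
  a_ML : module_hopf aML;
  a_NL : module_hopf aNL;
  a_h : coalg_map2 h;
  a1 : (forall p m l, tsum (fun p1 p2 => aML (aM p1 m) (aL p2 l)) (hD p) = aL p (aML m l)) /\
       (forall p n l, tsum (fun p1 p2 => aNL (aN p1 n) (aL p2 l)) (hD p) = aL p (aNL n l));
  a2 : forall p m n, tsum (fun p1 p2 => h (aM p1 m) (aN p2 n)) (hD p) = aL p (h m n);
  a3 : (forall n, h 1 n = heps n *: 1) /\ (forall m, h m 1 = heps m *: 1);
  a4 : (forall m n n', h m (n * n') =
          tsum (fun m1 m2 => tsum (fun n1 n2 =>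
                  h m1 n1 * aNL n2 (h m2 n')) (hD n)) (hD m)) /\
       (forall m m' n, h (m * m') n =
          tsum (fun m1 m2 => tsum (fun n1 n2 =>
                  aML m1 (h m' n1) * h m2 n2) (hD n)) (hD m));
  a5 : forall m n l,
       tsum (fun m1 m2 => tsum (fun n1 n2 => aML m1 (aNL n1 l) * h m2 n2) (hD n)) (hD m) =
       tsum (fun m1 m2 => tsum (fun n1 n2 => h m1 n1 * aNL n2 (aML m2 l)) (hD n)) (hD m)
}.

Record act2_morph (L M N P L' M' N' P' : cocHopf)
    (aL : P -> L -> L) (aM : P -> M -> M) (aN : P -> N -> N)
    (aML : M -> L -> L) (aNL : N -> L -> L) (h : M -> N -> L)
    (aL' : P' -> L' -> L') (aM' : P' -> M' -> M') (aN' : P' -> N' -> N')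
    (aML' : M' -> L' -> L') (aNL' : N' -> L' -> L') (h' : M' -> N' -> L')
    (alpha : L -> L') (beta : M -> M') (gamma : N -> N') (delta : P -> P') : Prop := {
  am_alpha : hopf_morph alpha;
  am_beta : hopf_morph beta;
  am_gamma : hopf_morph gamma;
  am_delta : hopf_morph delta;
  am_PL : forall p l, alpha (aL p l) = aL' (delta p) (alpha l);
  am_ML : forall m l, alpha (aML m l) = aML' (beta m) (alpha l);
  am_NL : forall n l, alpha (aNL n l) = aNL' (gamma n) (alpha l);
  am_PM : forall p m, beta (aM p m) = aM' (delta p) (beta m);
  am_PN : forall p n, gamma (aN p n) = aN' (delta p) (gamma n);
  am_h : forall m n, alpha (h m n) = h' (beta m) (gamma n)
}.

End Hopf.

Arguments sactL {K} _ _ _.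
Arguments sactM {K} _ _ _.
Arguments sactN {K} _ _ _.
Arguments sh {K} _ _ _.
Arguments slam {K} _ _.
Arguments slam' {K} _ _.
Arguments smu {K} _ _.
Arguments snu {K} _ _.

(* Main.v *)
Require Import Defs.
From HB Require Import structures.
From mathcomp Require Import all_boot all_algebra.
Set Implicit Arguments. Unset Strict Implicit. Unset Printing Implicit Defensive.
Import GRing.Theory.
Local Open Scope ring_scope.

Section Tools.
Variable K : fieldType.

Lemma eq_tsum (X Y : Type) (W : nmodType) (f g : X -> Y -> W) t :
  (forall a b, f a b = g a b) -> tsum f t = tsum g t.
Proof. by move=> e; apply: eq_bigr => p _; rewrite e. Qed.

Lemma tsum_add (X Y : Type) (W : nmodType) (f g : X -> Y -> W) t :
  tsum (fun a b => f a b + g a b) t = tsum f t + tsum g t.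
Proof. exact: big_split. Qed.

Lemma tsum_scale (X Y : Type) (W : lmodType K) k (f : X -> Y -> W) t :
  tsum (fun a b => k *: f a b) t = k *: tsum f t.
Proof. by rewrite /tsum scaler_sumr. Qed.

Lemma tsum_swap (X Y X' Y' : Type) (W : nmodType) (F : X -> Y -> X' -> Y' -> W) t t' :
  tsum (fun a b => tsum (F a b) t') t = tsum (fun c d => tsum (fun a b => F a b c d) t) t'.
Proof. rewrite /tsum; exact: exchange_big. Qed.

Lemma tsum_map (X Y X' Y' : Type) (W : nmodType) (F : X' * Y' -> X * Y) (f : X -> Y -> W) t :
  tsum f (map F t) = \sum_(p <- t) f (F p).1 (F p).2.
Proof. by rewrite /tsum big_map. Qed.

Lemma tsum_allpairs (X Y A B C D : Type) (W : nmodType) (F : A * B -> C * D -> X * Y)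
   (f : X -> Y -> W) s t :
  tsum f [seq F p q | p <- s, q <- t] = \sum_(p <- s) \sum_(q <- t) f (F p q).1 (F p q).2.
Proof. by rewrite /tsum big_allpairs_dep. Qed.

Section Lin.
Variables (X W : lmodType K) (f : X -> W) (Hf : lin_map f).
Lemma lin0 : f 0 = 0.
Proof.
have h := Hf 1 0 0; rewrite !scale1r addr0 in h.
have : f 0 - f 0 = f 0 + f 0 - f 0 by rewrite -h.
by rewrite addrK subrr.
Qed.
Lemma linD x y : f (x + y) = f x + f y.
Proof. by have := Hf 1 x y; rewrite !scale1r. Qed.
Lemma linZ a x : f (a *: x) = a *: f x.
Proof. by have := Hf a x 0; rewrite !addr0 lin0 addr0. Qed.
Lemma lin_sum I (r : seq I) (F : I -> X) : f (\sum_(i <- r) F i) = \sum_(i <- r) f (F i).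
Proof. exact: (big_morph f linD lin0). Qed.
Lemma lin_tsum A B (g : A -> B -> X) t : f (tsum g t) = tsum (fun a b => f (g a b)) t.
Proof. exact: lin_sum. Qed.
End Lin.

Lemma linE (X W : lmodType K) (f : X -> W) :
  (forall x y, f (x + y) = f x + f y) -> (forall a x, f (a *: x) = a *: f x) -> lin_map f.
Proof. by move=> hD hZ a x y; rewrite hD hZ. Qed.

Lemma lin_tsumF (X W : lmodType K) A B (G : X -> A -> B -> W) t :
  (forall a b, lin_map (fun x => G x a b)) -> lin_map (fun x => tsum (G x) t).
Proof.
move=> h; apply: linE => [x y|a x].
  by rewrite -tsum_add; apply: eq_tsum => u v; rewrite (linD (h u v)).
by rewrite -tsum_scale; apply: eq_tsum => u v; rewrite (linZ (h u v)).
Qed.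

Lemma lin_comp (X Y W : lmodType K) (f : X -> Y) (g : Y -> W) :
  lin_map f -> lin_map g -> lin_map (fun x => g (f x)).
Proof. by move=> hf hg a x y; rewrite hf hg. Qed.

Lemma lin_id (X : lmodType K) : lin_map (fun x : X => x).
Proof. by []. Qed.

Lemma lin_mulr (A : algType K) (c : A) : lin_map (fun x : A => x * c).
Proof. by move=> a x y; rewrite mulrDl scalerAl. Qed.
Lemma lin_mull (A : algType K) (c : A) : lin_map (fun x : A => c * x).
Proof. by move=> a x y; rewrite mulrDr scalerAr. Qed.

Lemma lin_mulF (A : algType K) (X : lmodType K) (f g : X -> A) c :
  lin_map f -> lin_map (fun x => f x * c).
Proof. by move=> hf; apply: lin_comp hf (lin_mulr c). Qed.

Lemma teq_tsum (X Y W : lmodType K) (t t' : seq (X * Y)) (f : X -> Y -> W) :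
  teq t t' -> bilin_map f -> tsum f t = tsum f t'.
Proof. by move=> h hf; apply: h. Qed.

Section HopfTools.
Variable H : cocHopf K.
Notation D := (@hD K H).
Notation e := (@heps K H).
Notation S := (@hS K H).

Lemma S_lin : lin_map S. Proof. exact: (ax_S_lin (hax H)). Qed.

Lemma D_lin (W : lmodType K) (f : H -> H -> W) : bilin_map f -> lin_map (fun x => tsum f (D x)).
Proof.
move=> hf a x y; rewrite (teq_tsum (ax_D_lin (hax H) a x y) hf) /tsum big_cat /= big_map.
by rewrite scaler_sumr; congr (_ + _); apply: eq_bigr => p _; rewrite (linZ (hf.1 _)).
Qed.

Lemma coassoc (W : lmodType K) (f : H -> H -> H -> W) x : trilin_map f ->
    tsum (fun u v => tsum (fun u1 u2 => f u1 u2 v) (D u)) (D x) =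
    tsum (fun u v => tsum (fun v1 v2 => f u v1 v2) (D v)) (D x).
Proof. by move=> h; apply: (ax_coassoc (hax H)). Qed.

Lemma cocomm (W : lmodType K) (f : H -> H -> W) x : bilin_map f ->
  tsum f (D x) = tsum (fun u v => f v u) (D x).
Proof. by move=> hf; rewrite (teq_tsum (ax_cocomm (hax H) x) hf) tsum_map. Qed.

Lemma counitL (W : lmodType K) (G : H -> W) x : lin_map G ->
  tsum (fun u v => e u *: G v) (D x) = G x.
Proof.
move=> hG; rewrite -{2}(proj1 (ax_counit (hax H) x)) (lin_tsum hG).
by apply: eq_tsum => u v; rewrite (linZ hG).
Qed.

Lemma counitR (W : lmodType K) (G : H -> W) x : lin_map G ->
  tsum (fun u v => e v *: G u) (D x) = G x.
Proof.
move=> hG; rewrite -{2}(proj2 (ax_counit (hax H) x)) (lin_tsum hG).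
by apply: eq_tsum => u v; rewrite (linZ hG).
Qed.

Lemma antipodeL (W : lmodType K) (G : H -> W) x : lin_map G ->
  tsum (fun u v => G (S u * v)) (D x) = e x *: G 1.
Proof.
by move=> hG; rewrite -(lin_tsum hG) (proj1 (ax_antipode (hax H) x)) (linZ hG).
Qed.

Lemma antipodeR (W : lmodType K) (G : H -> W) x : lin_map G ->
  tsum (fun u v => G (u * S v)) (D x) = e x *: G 1.
Proof.
by move=> hG; rewrite -(lin_tsum hG) (proj2 (ax_antipode (hax H) x)) (linZ hG).
Qed.

Lemma D_one (W : lmodType K) (f : H -> H -> W) : bilin_map f -> tsum f (D 1) = f 1 1.
Proof. by move=> hf; rewrite (teq_tsum (ax_D_one (hax H)) hf) /tsum big_seq1. Qed.

Lemma S1 : S 1 = 1.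
Proof.
have hf : bilin_map (fun u v : H => S u * v).
  split=> [y|x]; [exact: lin_mulF S_lin|exact: lin_mull].
have := proj1 (ax_antipode (hax H) 1).
by rewrite (D_one hf) mulr1 (ax_eps_one (hax H)) scale1r.
Qed.

End HopfTools.

Lemma morph_D (H H' : cocHopf K) (d : H -> H') (W : lmodType K) (f : H' -> H' -> W) x :
  hopf_morph d -> bilin_map f ->
  tsum f (hD (d x)) = tsum (fun a b => f (d a) (d b)) (hD x).
Proof. by case=> _ _ _ hD _ hf; rewrite (teq_tsum (hD x) hf) tsum_map. Qed.

Lemma coalg2_D (M N L : cocHopf K) (h : M -> N -> L) (W : lmodType K) (f : L -> L -> W) m n :
  coalg_map2 h -> bilin_map f ->
  tsum f (hD (h m n)) = tsum (fun a1 a2 => tsum (fun b1 b2 => f (h a1 b1) (h a2 b2)) (hD n)) (hD m).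
Proof. by case=> _ hD _ hf; rewrite (teq_tsum (hD m n) hf) tsum_allpairs. Qed.

End Tools.

Section Main.
Variable K : fieldType.

Lemma linC (X Y W : lmodType K) (g : Y -> W) (F : X -> Y) :
  lin_map g -> lin_map F -> lin_map (fun x => g (F x)).
Proof. by move=> hg hF a x y; rewrite hF hg. Qed.

Ltac lin_step := first [ exact: lin_id | exact: S_lin | apply: lin_tsumF => ? ?
  | apply: (linC (lin_mulr _)) | apply: (linC (lin_mull _)) | apply: (linC (S_lin _))
  | match goal with H : forall _, lin_map _ |- _ => apply: (linC (H _))
                  | H : lin_map _ |- _ => apply: (linC H) end ].
Ltac lin := repeat lin_step.

Section Mod.
Variables (B X : cocHopf K) (act : B -> X -> X) (Ha : module_hopf act).
Lemma act_lin1 y : lin_map (fun b => act b y). Proof. by case: Ha => [[]]. Qed.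
Lemma act_lin2 b : lin_map (act b). Proof. by case: Ha => [[]]. Qed.
Lemma act_mul b b' x : act (b * b') x = act b (act b' x). Proof. by case: Ha => _ [] . Qed.
Lemma act_one x : act 1 x = x. Proof. by case: Ha => _ []. Qed.
Lemma act_mulX b x y : act b (x * y) = tsum (fun b1 b2 => act b1 x * act b2 y) (hD b).
Proof. by case: Ha => _ _ []. Qed.
Lemma act_1 b : act b 1 = heps b *: 1. Proof. by case: Ha => _ _ []. Qed.
Lemma act_D b x : teq (hD (act b x)) [seq (act p.1 q.1, act p.2 q.2) | p <- hD b, q <- hD x].
Proof. by case: Ha. Qed.
Lemma act_eps b x : heps (act b x) = heps b * heps x. Proof. by case: Ha. Qed.
End Mod.

Section Morph.
Variables (H H' : cocHopf K) (d : H -> H') (Hd : hopf_morph d).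
Lemma hm_lin : lin_map d. Proof. by case: Hd. Qed.
Lemma hm_1 : d 1 = 1. Proof. by case: Hd. Qed.
Lemma hm_mul x y : d (x * y) = d x * d y. Proof. by case: Hd. Qed.
Lemma hm_eps x : heps (d x) = heps x. Proof. by case: Hd. Qed.
End Morph.

Lemma module_comp (B P X : cocHopf K) (act : P -> X -> X) (d : B -> P) :
  module_hopf act -> hopf_morph d -> module_hopf (fun b x => act (d b) x).
Proof.
move=> Ha Hd; split.
- split=> [y|b]; last exact: act_lin2.
  exact: lin_comp (hm_lin Hd) (act_lin1 Ha y).
- split=> [b b' x|x]; first by rewrite (hm_mul Hd) (act_mul Ha).
  by rewrite (hm_1 Hd) (act_one Ha).
- split=> [b x y|b]; last by rewrite (act_1 Ha) (hm_eps Hd).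
  rewrite (act_mulX Ha) (morph_D _ Hd) //.
  split=> [y'|x'].
    exact: lin_mulF (act_lin1 Ha x).
  exact: lin_comp (act_lin1 Ha y) (lin_mull _).
- move=> b x W f hf.
  rewrite (act_D Ha (d b) x hf) !tsum_allpairs /=.
  have := (@morph_D _ _ _ _ W
     (fun p1 p2 => tsum (fun q1 q2 => f (act p1 q1) (act p2 q2)) (hD x)) b Hd).
  apply.
  split=> [y|y].
    apply: lin_tsumF => q1 q2.
    exact: lin_comp (act_lin1 Ha q1) (hf.1 _).
  apply: lin_tsumF => q1 q2.
  exact: lin_comp (act_lin1 Ha q2) (hf.2 _).
- by move=> b x; rewrite (act_eps Ha) (hm_eps Hd).
Qed.

Lemma conj_collapse (H : cocHopf K) (z x : H) :
  tsum (fun x1 x2 => tsum (fun y1 y2 => y1 * z * hS y2) (hD x1) * x2) (hD x) = x * z.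
Proof.
transitivity (tsum (fun u v => tsum (fun u1 u2 => u1 * z * hS u2 * v) (hD u)) (hD x)).
  by apply: eq_tsum => u v; rewrite (lin_tsum (lin_mulr v)).
rewrite (coassoc (f := fun u1 u2 v => u1 * z * hS u2 * v)); last first.
  by split=> [y w|y w|y w]; lin.
transitivity (tsum (fun u v => heps v *: (u * z * 1)) (hD x)).
  apply: eq_tsum => u v.
  rewrite -(antipodeL (G := fun w => u * z * w)); last by lin.
  by apply: eq_tsum => a b; rewrite mulrA.
by rewrite (counitR (G := fun w => w * z * 1)) ?mulr1 //; lin.
Qed.


Lemma a1_gen (P X L : cocHopf K) (aX : P -> X -> X) (d : X -> P) (aL : P -> L -> L) :
  crossed_module aX d -> module_hopf aL ->
  forall p x l, tsum (fun p1 p2 => aL (d (aX p1 x)) (aL p2 l)) (hD p) = aL p (aL (d x) l).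
Proof.
case=> _ Hd Hc _ HaL p x l.
have aL1 := act_lin1 HaL; have aL2 := act_lin2 HaL.
transitivity (tsum (fun u v => tsum (fun u1 u2 => aL (u1 * d x * hS u2) (aL v l)) (hD u)) (hD p)).
  by apply: eq_tsum => u v; rewrite Hc (lin_tsum (aL1 _)).
rewrite (coassoc (f := fun u1 u2 v => aL (u1 * d x * hS u2) (aL v l))); last by split=> *; lin.
transitivity (tsum (fun u v => heps v *: aL (u * d x) (aL 1 l)) (hD p)).
  apply: eq_tsum => u v.
  rewrite -(antipodeL (G := fun w => aL (u * d x) (aL w l))); last by lin.
  by apply: eq_tsum => a b; rewrite -!(act_mul HaL) !mulrA.
rewrite (counitR (G := fun w => aL (w * d x) (aL 1 l))); last by lin.
by rewrite (act_one HaL) (act_mul HaL).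
Qed.

Lemma cm_conj (B X : cocHopf K) (act : B -> X -> X) (d : X -> B) :
  crossed_module act d -> forall x l, tsum (fun x1 x2 => act (d x1) l * x2) (hD x) = x * l.
Proof.
case=> _ _ _ H4 x l; rewrite -conj_collapse; apply: eq_tsum => a b; by rewrite H4.
Qed.

Lemma cm_B1 (B X : cocHopf K) (act : B -> X -> X) (d : X -> B) :
  crossed_module act d -> forall b y, tsum (fun b1 b2 => d (act b1 y) * b2) (hD b) = b * d y.
Proof.
case=> _ _ H3 _ b y; rewrite -conj_collapse; apply: eq_tsum => a c; by rewrite H3.
Qed.

Lemma rearr (H : cocHopf K) (W : lmodType K) (f : H -> H -> H -> W) x : trilin_map f ->
  tsum (fun u v => tsum (fun u1 u2 => f u1 u2 v) (hD u)) (hD x) =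
  tsum (fun u v => tsum (fun u1 u2 => f u1 v u2) (hD u)) (hD x).
Proof.
case=> h1 h2 h3.
rewrite coassoc; last by split.
transitivity (tsum (fun u v => tsum (fun v1 v2 => f u v2 v1) (hD v)) (hD x)).
  by apply: eq_tsum => u v; apply: cocomm; split.
rewrite -(coassoc (f := fun a b c => f a c b)) //.
all: by split=> *; [apply: h1|apply: h3|apply: h2].
Qed.

Section Square.
Variables (L M N P : cocHopf K)
    (aL : P -> L -> L) (aM : P -> M -> M) (aN : P -> N -> N) (h : M -> N -> L)
    (lam : L -> M) (lam' : L -> N) (mu : M -> P) (nu : N -> P).
Hypothesis Hx : is_crossed_square aL aM aN h lam lam' mu nu.

Let Hmu := cs_mu Hx.
Let Hnu := cs_nu Hx.
Let Hlam := cs_lam Hx.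
Let Hlam' := cs_lam' Hx.
Let HaL : module_hopf aL. Proof. by case: (cs1_L Hx). Qed.
Let HaM : module_hopf aM. Proof. by case: (cs1_M Hx). Qed.

Lemma lemB m n :
  tsum (fun m1 m2 => tsum (fun n1 n2 => mu (lam (h m1 n1)) * nu n2 * mu m2) (hD n)) (hD m)
  = mu m * nu n.
Proof.
have mul := hm_lin Hmu; have nul := hm_lin Hnu; have laml := hm_lin Hlam.
have aM1 := act_lin1 HaM; have aM2 := act_lin2 HaM.
have [h1 h2] : bilin_map h by case: (cs_h Hx).
transitivity (tsum (fun m1 m2 => tsum (fun c1 c2 => mu c1 * (nu n * mu (hS c2)) * mu m2) (hD m1)) (hD m)).
  apply: eq_tsum => m1 m2.
  transitivity (tsum (fun n1 n2 => tsum (fun c1 c2 =>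
     mu c1 * (mu (aM (nu n1) (hS c2)) * nu n2) * mu m2) (hD m1)) (hD n)).
    apply: eq_tsum => n1 n2.
    rewrite (proj1 (cs4 Hx)) (lin_tsum mul) (lin_tsum (lin_mulr _)) (lin_tsum (lin_mulr _)).
    by apply: eq_tsum => c1 c2; rewrite (hm_mul Hmu) !mulrA.
  rewrite tsum_swap; apply: eq_tsum => c1 c2.
  transitivity (mu c1 * tsum (fun n1 n2 => mu (aM (nu n1) (hS c2)) * nu n2) (hD n) * mu m2).
    by rewrite (lin_tsum (f := fun w => mu c1 * w * mu m2)) //; lin.
  congr (_ * _ * _).
  rewrite -(cm_B1 (cs1_M Hx)); symmetry; apply: morph_D => //.
  by split=> *; lin.
rewrite (coassoc (f := fun c1 c2 m2 => mu c1 * (nu n * mu (hS c2)) * mu m2)); last first.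
  by split=> *; lin.
transitivity (tsum (fun u v => heps v *: (mu u * nu n * mu 1)) (hD m)).
  apply: eq_tsum => u v.
  rewrite -(antipodeL (G := fun w => mu u * nu n * mu w)); last by lin.
  by apply: eq_tsum => a b; rewrite (hm_mul Hmu) !mulrA.
rewrite (counitR (G := fun w => mu w * nu n * mu 1)); last by lin.
by rewrite (hm_1 Hmu) mulr1.
Qed.

Lemma lemA5 m n l :
  tsum (fun m1 m2 => tsum (fun n1 n2 => aL (mu m1) (aL (nu n1) l) * h m2 n2) (hD n)) (hD m) =
  tsum (fun m1 m2 => tsum (fun n1 n2 => h m1 n1 * aL (nu n2) (aL (mu m2) l)) (hD n)) (hD m).
Proof.
have mul := hm_lin Hmu; have nul := hm_lin Hnu; have laml := hm_lin Hlam.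
have aL1 := act_lin1 HaL; have aL2 := act_lin2 HaL.
have [h1 h2] : bilin_map h by case: (cs_h Hx).
symmetry.
transitivity (tsum (fun m1 m2 => tsum (fun n1 n2 => tsum (fun a1 a2 => tsum (fun b1 b2 =>
   aL (mu (lam (h a1 b1)) * (nu n2 * mu m2)) l * h a2 b2) (hD n1)) (hD m1)) (hD n)) (hD m)).
  apply: eq_tsum => m1 m2; apply: eq_tsum => n1 n2.
  rewrite -(act_mul HaL) -(cm_conj (cs1_L Hx)).
  rewrite (coalg2_D _ _ (cs_h Hx)); last by split=> *; lin.
  by apply: eq_tsum => a1 a2; apply: eq_tsum => b1 b2; rewrite (act_mul HaL (mu (lam (h a1 b1)))).
transitivity (tsum (fun m1 m2 => tsum (fun a1 a2 => tsum (fun n1 n2 => tsum (fun b1 b2 =>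
   aL (mu (lam (h a1 b1)) * (nu n2 * mu m2)) l * h a2 b2) (hD n1)) (hD n)) (hD m1)) (hD m)).
  by apply: eq_tsum => m1 m2; rewrite tsum_swap.
transitivity (tsum (fun p q => tsum (fun p1 p2 => tsum (fun n1 n2 => tsum (fun b1 b2 =>
   aL (mu (lam (h p1 b1)) * (nu n2 * mu p2)) l * h q b2) (hD n1)) (hD n)) (hD p)) (hD m)).
  by apply: rearr; split=> *; lin.
transitivity (tsum (fun p q => tsum (fun p1 p2 => tsum (fun r s => tsum (fun r1 r2 =>
   aL (mu (lam (h p1 r1)) * (nu r2 * mu p2)) l * h q s) (hD r)) (hD n)) (hD p)) (hD m)).
  apply: eq_tsum => p q; apply: eq_tsum => p1 p2.
  by apply: rearr; split=> *; lin.
transitivity (tsum (fun p q => tsum (fun r s => tsum (fun p1 p2 => tsum (fun r1 r2 =>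
   aL (mu (lam (h p1 r1)) * (nu r2 * mu p2)) l * h q s) (hD r)) (hD p)) (hD n)) (hD m)).
  by apply: eq_tsum => p q; rewrite tsum_swap.
apply: eq_tsum => p q; apply: eq_tsum => r s.
transitivity (aL (tsum (fun p1 p2 => tsum (fun r1 r2 =>
    mu (lam (h p1 r1)) * nu r2 * mu p2) (hD r)) (hD p)) l * h q s).
  rewrite (lin_tsum (f := fun w => aL w l * h q s)); last by lin.
  apply: eq_tsum => p1 p2; rewrite (lin_tsum (f := fun w => aL w l * h q s)); last by lin.
  by apply: eq_tsum => r1 r2; rewrite !mulrA.
by rewrite lemB (act_mul HaL).
Qed.

Lemma lemA3 : (forall n, h 1 n = heps n *: 1) /\ (forall m, h m 1 = heps m *: 1).
Proof.
have aL2 := act_lin2 HaL; have aL1 := act_lin1 HaL.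
split=> [n|m].
  have := (proj1 (cs5 Hx)) 1 n; rewrite (hm_1 Hlam) => ->.
  rewrite D_one; last by split=> *; lin.
  by rewrite S1 (act_1 HaL) (hm_eps Hnu) mul1r.
have := (proj2 (cs5 Hx)) m 1; rewrite (hm_1 Hlam') => ->.
rewrite D_one; last by split=> *; lin.
by rewrite S1 (act_1 HaL) (hm_eps Hmu) mulr1.
Qed.

End Square.
End Main.

Theorem proposition2p5 (K : fieldType) :
  (forall X : xsquare K,
     is_2action (sactL X) (sactM X) (sactN X)
       (fun m l => sactL X (smu X m) l) (fun n l => sactL X (snu X n) l) (sh X))
  /\
  (forall (X Y : xsquare K) (alpha : sL X -> sL Y) (beta : sM X -> sM Y)
          (gamma : sN X -> sN Y) (delta : sP X -> sP Y),
     xsq_morph alpha beta gamma delta ->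
     act2_morph (sactL X) (sactM X) (sactN X)
       (fun m l => sactL X (smu X m) l) (fun n l => sactL X (snu X n) l) (sh X)
       (sactL Y) (sactM Y) (sactN Y)
       (fun m l => sactL Y (smu Y m) l) (fun n l => sactL Y (snu Y n) l) (sh Y)
       alpha beta gamma delta).
Proof.
split.
- case=> L M N P aL aM aN h lam lam' mu nu Hx /=.
  have [HaM Hmu _ _] := cs1_M Hx.
  have [HaN Hnu _ _] := cs1_N Hx.
  have [HaL _ _ _] := cs1_L Hx.
  split.
  + exact: HaL.
  + exact: HaM.
  + exact: HaN.
  + exact: module_comp HaL Hmu.
  + exact: module_comp HaL Hnu.
  + exact: cs_h Hx.
  + split; [exact: a1_gen (cs1_M Hx) HaL | exact: a1_gen (cs1_N Hx) HaL].
  + exact: cs3 Hx.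
  + exact: lemA3 Hx.
  + exact: cs6 Hx.
  + exact: lemA5 Hx.
- move=> X Y alpha beta gamma delta [Ha Hb Hg Hd xl xl' xmu xnu xaL xaM xaN xh].
  by split=> // [m l|n l]; rewrite xaL ?xmu ?xnu.
Qed.
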